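(* Let $\mathcal F$ be a proper filter on $\omega$. In each of the following pairs the two games are dual, i.e. a player has a winning strategy in one game if and only if the other player has a winning strategy in the other game: (1) $\mathfrak G(\mathcal F^+,\omega,\mathcal F)$ and $\mathfrak G(\mathcal F,\omega,\mathcal F^c)$; (2) $\mathfrak G(\mathcal F^+,\omega,\mathcal F^+)$ and $\mathfrak G(\mathcal F,\omega,\mathcal F^* )$; (3) $\mathfrak G(\mathcal F^+,\omega,\mathcal F^c)$ and $\mathfrak G(\mathcal F,\omega,\mathcal F)$; (4) $\mathfrak G(\mathcal F^+,\omega,\mathcal F^* )$ and $\mathfrak G(\mathcal F,\omega,\mathcal F^+)$.
   Context: A filter on $\omega$ is a family $\mathcal F\subseteq\mathcal P(\omega)$ closed under finite intersections and supersets and containing all cofinite sets; it is proper if all its members are infinite. $\mathcal F^+=\{X:\omega\setminus X\notin\mathcal F\}$, $\mathcal F^c=\mathcal P(\omega)\setminus\mathcal F$, $\mathcal F^*=\mathcal P(\omega)\setminus\mathcal F^+$. Game $\mathfrak G(\mathcal X,\omega,\mathcal Z)$: at each stage $k\in\omega$, player I chooses $X_k\in\mathcal X$ and player II responds with $n_k\in X_k$; II wins if $\{n_k:k\in\omega\}\in\mathcal Z$, otherwise I wins. *)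

(* Defs.v *)
From Stdlib Require Import List Arith.
Import ListNotations.

Definition set_nat := nat -> Prop.
Definition family := set_nat -> Prop.

Definition compl (X : set_nat) : set_nat := fun n => ~ X n.
Definition cofinite (X : set_nat) : Prop := exists N, forall n, N <= n -> X n.
Definition infinite (X : set_nat) : Prop := forall N, exists n, N <= n /\ X n.

Definition is_filter (F : family) : Prop :=
  (forall A B, F A -> F B -> F (fun n => A n /\ B n)) /\
  (forall A B, F A -> (forall n, A n -> B n) -> F B) /\
  (forall A, cofinite A -> F A).

Definition proper (F : family) : Prop := forall A, F A -> infinite A.

Definition Fplus (F : family) : family := fun X => ~ F (compl X).
Definition Fc (F : family) : family := fun X => ~ F X.
Definition Fstar (F : family) : family := fun X => ~ Fplus F X.

Definition prefix {A} (f : nat -> A) (k : nat) : list A := map f (seq 0 k).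

Definition range (n : nat -> nat) : set_nat := fun m => exists k, n k = m.

(* Game G(XX, omega, ZZ): at stage k, I plays X_k in XX, II answers n_k in X_k;
   II wins iff {n_k : k} in ZZ.
   A strategy for I maps the list of II's previous moves (which, together with
   the strategy, determines the whole history) to I's next move.
   A strategy for II maps the list of I's moves so far (X_0,...,X_k) to n_k. *)
Definition I_strategy := list nat -> set_nat.
Definition II_strategy := list set_nat -> nat.

Definition I_legal (XX : family) (s : I_strategy) : Prop :=
  forall h, XX (s h).

Definition I_winning (XX ZZ : family) (s : I_strategy) : Prop :=
  I_legal XX s /\
  forall n : nat -> nat, (forall k, s (prefix n k) (n k)) -> ~ ZZ (range n).

Definition II_legal (XX : family) (t : II_strategy) : Prop :=
  forall h X, XX X -> X (t (h ++ [X])).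

Definition II_winning (XX ZZ : family) (t : II_strategy) : Prop :=
  II_legal XX t /\
  forall X : nat -> set_nat, (forall k, XX (X k)) ->
    ZZ (range (fun k => t (prefix X (S k)))).

Definition I_wins (XX ZZ : family) : Prop := exists s, I_winning XX ZZ s.
Definition II_wins (XX ZZ : family) : Prop := exists t, II_winning XX ZZ t.

Definition dual_games (XX1 ZZ1 XX2 ZZ2 : family) : Prop :=
  (I_wins XX1 ZZ1 <-> II_wins XX2 ZZ2) /\ (II_wins XX1 ZZ1 <-> I_wins XX2 ZZ2).

(* Main.v *)
Require Import Defs.
From Stdlib Require Import List Arith Classical ClassicalEpsilon FunctionalExtensionality.
Import ListNotations.

Lemma prefix_S {A} (f : nat -> A) k : prefix f (S k) = prefix f k ++ [f k].
Proof. unfold prefix. rewrite seq_S, map_app. reflexivity. Qed.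

Section L1.
Variables (PI PII Z1 Z2 : family).
Hypothesis compat : forall A B, PI A -> PII B -> exists n, A n /\ B n.
Hypothesis HZ : forall S, ~ Z1 S -> Z2 S.

Lemma L1 : I_wins PI Z1 -> II_wins PII Z2.
Proof.
  intros [s [Hleg Hwin]].
  set (c := fun (l : list nat) (X : set_nat) =>
              epsilon (inhabits 0) (fun n => s l n /\ X n)).
  assert (Hc : forall l X, PII X -> s l (c l X) /\ X (c l X)).
  { intros l X HX. unfold c. apply epsilon_spec. apply compat; auto. }
  set (histr := fix histr (r : list set_nat) : list nat :=
         match r with [] => [] | Y :: r' => c (rev (histr r')) Y :: histr r' end).
  set (t := fun Ys : list set_nat => hd 0 (histr (rev Ys))).
  assert (Ht : forall h X, t (h ++ [X]) = c (rev (histr (rev h))) X).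
  { intros h X. unfold t. rewrite rev_unit. reflexivity. }
  assert (Hh : forall h X, rev (histr (rev (h ++ [X]))) =
                           rev (histr (rev h)) ++ [c (rev (histr (rev h))) X]).
  { intros h X. rewrite rev_unit. reflexivity. }
  exists t. split.
  - intros h X HX. rewrite Ht. apply Hc; auto.
  - intros X HX. apply HZ.
    set (n := fun k => t (prefix X (S k))).
    assert (HL : forall k, rev (histr (rev (prefix X k))) = prefix n k).
    { induction k. reflexivity.
      rewrite !prefix_S, Hh, IHk. f_equal. f_equal. unfold n.
      rewrite prefix_S, Ht, IHk. reflexivity. }
    apply Hwin. intros k. unfold n at 2. rewrite prefix_S, Ht, HL. exact (proj1 (Hc _ _ (HX k))).
Qed.
End L1.

Section L2.
Variables (PI PII Z1 Z2 : family).
Hypothesis HY : forall t : II_strategy, II_legal PII t -> forall H,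
    PI (fun n => exists X, PII X /\ t (H ++ [X]) = n).
Hypothesis HZ : forall S, Z1 S -> ~ Z2 S.

Lemma L2 : II_wins PII Z1 -> I_wins PI Z2.
Proof.
  intros [t [Hleg Hwin]].
  set (cX := fun (H : list set_nat) (m : nat) =>
       epsilon (inhabits (fun _ : nat => True)) (fun X => PII X /\ t (H ++ [X]) = m)).
  set (histr := fix histr (r : list nat) : list set_nat :=
         match r with [] => [] | m :: r' => cX (rev (histr r')) m :: histr r' end).
  set (hist := fun l => rev (histr (rev l))).
  assert (Hh : forall l m, hist (l ++ [m]) = hist l ++ [cX (hist l) m]).
  { intros l m. unfold hist. rewrite rev_unit. reflexivity. }
  exists (fun l n => exists X, PII X /\ t (hist l ++ [X]) = n). split.
  - intros h. apply HY. exact Hleg.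
  - intros n Hn. apply HZ.
    set (Xs := fun k => cX (hist (prefix n k)) (n k)).
    assert (HX : forall k, PII (Xs k) /\ t (hist (prefix n k) ++ [Xs k]) = n k).
    { intros k. unfold Xs, cX. apply epsilon_spec. apply Hn. }
    assert (HP : forall k, hist (prefix n k) = prefix Xs k).
    { induction k. reflexivity. rewrite !prefix_S, Hh, <- IHk. reflexivity. }
    assert (E : (fun k => t (prefix Xs (S k))) = n).
    { apply functional_extensionality. intros k.
      rewrite prefix_S, <- HP. apply HX. }
    rewrite <- E. apply Hwin. intros k. apply HX.
Qed.
End L2.

Section Filt.
Variable F : family.
Hypothesis HF : is_filter F.

Lemma compat1 : forall A B, Fplus F A -> F B -> exists n, A n /\ B n.
Proof.
  intros A B HA HB. apply NNPP. intros C. apply HA.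
  destruct HF as [_ [Hs _]]. apply (Hs B); auto.
  intros n Bn An. apply C. eauto.
Qed.

Lemma HY1 : forall t : II_strategy, II_legal (Fplus F) t -> forall H,
    F (fun n => exists X, Fplus F X /\ t (H ++ [X]) = n).
Proof.
  intros t Hl H. set (Y := fun n => exists X, Fplus F X /\ t (H ++ [X]) = n).
  destruct (classic (F Y)) as [?|NY]; auto. exfalso.
  assert (Hc : Fplus F (compl Y)).
  { intros Hcc. apply NY. destruct HF as [_ [Hs _]]. apply (Hs _ _ Hcc).
    intros n Hn. apply NNPP. exact Hn. }
  pose proof (Hl H _ Hc) as Ht. apply Ht. exists (compl Y). auto.
Qed.

Lemma HY2 : forall t : II_strategy, II_legal F t -> forall H,
    Fplus F (fun n => exists X, F X /\ t (H ++ [X]) = n).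
Proof.
  intros t Hl H Hc. pose proof (Hl H _ Hc) as Ht. apply Ht. eauto.
Qed.

Lemma dual_gen (Z1 Z2 : family) (HZ : forall S, Z1 S <-> ~ Z2 S) :
  dual_games (Fplus F) Z1 F Z2.
Proof.
  split; split.
  - apply L1. apply compat1. intros S NS. apply NNPP. intro C. apply NS, HZ, C.
  - apply L2. apply HY2. intros S HS H1. exact (proj1 (HZ S) H1 HS).
  - apply L2. apply HY1. intros S HS. apply HZ. exact HS.
  - apply L1. intros A B HA HB. destruct (compat1 B A HB HA) as [n [? ?]]; eauto.
    intros S NS. apply HZ. exact NS.
Qed.
End Filt.

Theorem theorem2p10 (F : family) (HF : is_filter F) (Hp : proper F) :
  dual_games (Fplus F) F F (Fc F) /\
  dual_games (Fplus F) (Fplus F) F (Fstar F) /\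
  dual_games (Fplus F) (Fc F) F F /\
  dual_games (Fplus F) (Fstar F) F (Fplus F).
Proof.
  unfold Fc, Fstar.
  repeat split; apply dual_gen; auto; intros S; split; intros H;
    try tauto; apply NNPP; tauto.
Qed.
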